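(* Let $H$ be a non-abelian finite $p$-group with cyclic centre (so $H$ is monolithic), and let $C$ be a finite $p$-group of order $n$. Let $W=H\wr C$ be the regular wreath product with base group $B=H^n$, let $Z=Z(H)^n$ and $F=\{(x_1,\dots,x_n)\in Z: x_1x_2\cdots x_n=1\}$ (a normal subgroup of $W$). Then the wreath-central product $J=W/F$ satisfies $Z(J)\cong Z(H)$; hence $J$ is monolithic.
   Context: A group is monolithic if the intersection of all its nontrivial normal subgroups is nontrivial. *)

(* Defs.v *)
From HB Require Import structures.
From mathcomp Require Import all_boot all_fingroup all_solvable.
Set Implicit Arguments. Unset Strict Implicit. Unset Printing Implicit Defensive.

Import GroupScope.

(* Regular wreath product  H wr C  =  H^C  ><|  C, where C acts on the base
   group H^C (functions C -> H, i.e. n = |C| copies of H indexed by C) by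
   left translation of coordinates:  (a . g) x = g (a^-1 x). *)
Section Wreath.
Variables (hT cT : finGroupType).

Definition wreath_type : Type := ({ffun cT -> hT} * cT)%type.
HB.instance Definition _ := Finite.on wreath_type.

Definition wr_mul (u v : wreath_type) : wreath_type :=
  ([ffun x => u.1 x * v.1 (u.2^-1 * x)], u.2 * v.2).
Definition wr_one : wreath_type := ([ffun => 1], 1).
Definition wr_inv (u : wreath_type) : wreath_type :=
  ([ffun y => (u.1 (u.2 * y))^-1], u.2^-1).

Lemma wr_mulA : associative wr_mul.
Proof.
move=> [f a] [g b] [h c]; rewrite /wr_mul /=; congr (_, _); last by rewrite mulgA.
by apply/ffunP=> x; rewrite !ffunE mulgA invMg mulgA.
Qed.

Lemma wr_mul1 : left_id wr_one wr_mul.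
Proof.
move=> [f a]; rewrite /wr_mul /=; congr (_, _); last by rewrite mul1g.
by apply/ffunP=> x; rewrite !ffunE mul1g invg1 mul1g.
Qed.

Lemma wr_mulV : left_inverse wr_one wr_inv wr_mul.
Proof.
move=> [f a]; rewrite /wr_mul /= /wr_one; congr (_, _); last by rewrite mulVg.
by apply/ffunP=> x; rewrite !ffunE invgK mulVg.
Qed.

HB.instance Definition _ :=
  Finite_isGroup.Build wreath_type wr_mulA wr_mul1 wr_mulV.

(* Z = Z(H)^n (inside the base group), and
   F = { (x_c)_c in Z : prod_c x_c = 1 }  (product well defined: Z(H) abelian). *)
Definition wreath_F : {set wreath_type} :=
  [set u : wreath_type | [&& [forall c, u.1 c \in 'Z([set: hT])],
                            u.2 == 1 & \prod_(c : cT) u.1 c == 1]].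

End Wreath.

Definition monolithic (gT : finGroupType) (G : {set gT}) : bool :=
  \bigcap_(N : {group gT} | (N <| G) && (N != 1%G)) N != 1.

(* Main.v *)
Require Import Defs.
From HB Require Import structures.
From mathcomp Require Import all_boot all_fingroup all_solvable.
Set Implicit Arguments. Unset Strict Implicit. Unset Printing Implicit Defensive.
Import GroupScope.

Lemma rem_prod (gT : finGroupType) (I : eqType) (t : seq I) x (f : I -> gT) :
  (forall i j, commute (f i) (f j)) -> x \in t ->
  \prod_(i <- t) f i = f x * \prod_(i <- rem x t) f i.
Proof.
move=> fC; elim: t => // y t IH; rewrite in_cons big_cons /=.
case: (eqVneq y x) => [->|nyx] /=; first by [].

move=> xt.
by rewrite big_cons IH // !mulgA fC.
Qed.

Lemma prod_perm (gT : finGroupType) (I : eqType) (s t : seq I) (f : I -> gT) :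
  (forall i j, commute (f i) (f j)) -> perm_eq s t ->
  \prod_(i <- s) f i = \prod_(i <- t) f i.
Proof.
move=> fC; elim: s t => [|x s IH] t pst.
  by move/perm_size: pst => /esym/size0nil ->.
have xt : x \in t by rewrite -(perm_mem pst) mem_head.
rewrite big_cons (rem_prod fC xt) (IH (rem x t)) //.
by rewrite -(perm_cons x) (perm_trans pst) // perm_to_rem.
Qed.

Lemma prod_reindex (gT : finGroupType) (cT : finGroupType) (f : cT -> gT) b :
  (forall i j, commute (f i) (f j)) ->
  \prod_(c : cT) f (b * c) = \prod_(c : cT) f c.
Proof.
move=> fC; rewrite -(big_map (mulg b) xpredT f); apply: prod_perm => //.
apply: uniq_perm; first by rewrite map_inj_uniq ?index_enum_uniq //; apply: mulgI.
  exact: index_enum_uniq.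
move=> c; rewrite mem_index_enum; apply/mapP; exists (b^-1 * c).
  by rewrite mem_index_enum.
by rewrite mulKVg.
Qed.

Lemma prod_delta (gT : finGroupType) (I : finType) (i0 : I) (z : gT) :
  \prod_(i : I) (if i == i0 then z else 1) = z.
Proof. by rewrite -big_mkcond big_pred1_eq. Qed.

Section Wr.
Variables (hT cT : finGroupType).
Local Notation W := (wreath_type hT cT).
Local Notation ZH := ('Z([set: hT])).
Local Notation F := (wreath_F hT cT).
Implicit Types u v w : W.

Lemma mulW1 u v x : (u * v).1 x = u.1 x * v.1 (u.2^-1 * x).
Proof. by rewrite /= ffunE. Qed.
Lemma mulW2 u v : (u * v).2 = u.2 * v.2.
Proof. by []. Qed.
Lemma invW1 u x : (u^-1).1 x = (u.1 (u.2 * x))^-1.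
Proof. by rewrite /= ffunE. Qed.
Lemma invW2 u : (u^-1).2 = u.2^-1.
Proof. by []. Qed.
Lemma oneW1 x : (1 : W).1 x = 1.
Proof. by rewrite /= ffunE. Qed.
Lemma oneW2 : (1 : W).2 = 1.
Proof. by []. Qed.

Lemma cZC z y : z \in ZH -> commute z y.
Proof. by case/centerP=> _ /(_ y (in_setT y)). Qed.

Definition Zb : {set W} :=
  [set u : W | [forall c, u.1 c \in ZH] && (u.2 == 1)].

Lemma inF u : (u \in F) = [&& [forall c, u.1 c \in ZH], u.2 == 1 & \prod_(c : cT) u.1 c == 1].
Proof. by rewrite inE. Qed.

Lemma inZb u : (u \in Zb) = [forall c, u.1 c \in ZH] && (u.2 == 1).
Proof. by rewrite inE. Qed.

Lemma prodM_Z (f g : cT -> hT) : (forall c, g c \in ZH) ->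
  \prod_(c : cT) (f c * g c) = \prod_(c : cT) f c * \prod_(c : cT) g c.
Proof. by move=> gZ; apply: prodgM_commute => i j _ _; apply/commute_sym/cZC. Qed.

Lemma Zb_mul u v : u \in Zb -> v \in Zb ->
  [/\ u * v \in Zb, forall c, (u * v).1 c = u.1 c * v.1 c & (u * v).2 = 1].
Proof.
rewrite !inZb => /andP[/forallP uZ /eqP u2] /andP[/forallP vZ /eqP v2].
have E c : (u * v).1 c = u.1 c * v.1 c by rewrite mulW1 u2 invg1 mul1g.
have E2 : (u * v).2 = 1 by rewrite mulW2 u2 v2 mulg1.
split=> //; rewrite E2 eqxx andbT; apply/forallP=> c; rewrite E.
exact: groupM.
Qed.

Fact Zb_group_set : group_set Zb.
Proof.
apply/group_setP; split.
  by rewrite inZb oneW2 eqxx andbT; apply/forallP=> c; rewrite oneW1 group1.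
by move=> u v uZ vZ; case: (Zb_mul uZ vZ).
Qed.
Canonical Zb_group := Group Zb_group_set.

Fact F_group_set : group_set F.
Proof.
apply/group_setP; split.
  rewrite inF oneW2 eqxx /=; apply/andP; split.
    by apply/forallP=> c; rewrite oneW1 group1.
  by apply/eqP; apply: big1 => c _; rewrite oneW1.
move=> u v; rewrite !inF => /and3P[uZ u2 up] /and3P[vZ v2 vp].
have uZb : u \in Zb by rewrite inZb uZ u2.
have vZb : v \in Zb by rewrite inZb vZ v2.
case: (Zb_mul uZb vZb); rewrite inZb => /andP[-> ->] E _ /=.
rewrite (eq_bigr _ (fun c _ => E c)) prodM_Z ?(eqP up) ?(eqP vp) ?mulg1 //.
by move=> c; move/forallP: vZ.
Qed.
Canonical F_group := Group F_group_set.

Lemma conjW1 u w x : u \in Zb -> (u ^ w).1 x = u.1 (w.2 * x).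
Proof.
rewrite inZb => /andP[/forallP uZ /eqP u2].
rewrite /conjg mulW1 mulW1 invW1 invW2.
rewrite invgK u2 invg1 mul1g (cZC _ (uZ _)) mulKg //.
Qed.

Lemma conjW2 u w : u \in Zb -> (u ^ w).2 = 1.
Proof.
by rewrite inZb => /andP[_ /eqP u2]; rewrite /conjg /= u2 mul1g mulVg.
Qed.

Lemma F_normal : F <| [set: W].
Proof.
rewrite /normal subsetT /=; apply/subsetP=> w _; rewrite inE.
apply/subsetP=> y; rewrite mem_conjg => yF.
rewrite -(conjgKV w y); set u := y ^ w^-1 in yF *.
have uZb : u \in Zb by move: yF; rewrite inF inZb => /and3P[-> -> _].
move: yF; rewrite inF => /and3P[/forallP uZ _ /eqP up].
rewrite inF (conjW2 w uZb) eqxx andTb; apply/andP; split.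
  by apply/forallP=> c; rewrite conjW1.
rewrite (eq_bigr _ (fun c _ => conjW1 w c uZb)) prod_reindex ?up //.
by move=> i j; apply: cZC.
Qed.

Definition dv (k : hT) (x0 : cT) : W := ([ffun x => if x == x0 then k else 1], 1).

Lemma comm_dv k x0 u x : [~ dv k x0, u].1 x =
  (if x == x0 then k else 1)^-1 *
  ((u.1 (u.2 * x))^-1 * (if u.2 * x == x0 then k else 1) * u.1 (u.2 * x)).
Proof.
rewrite /commg /conjg !mulW1 !invW1 !invW2 /dv /= !ffunE.
by rewrite !invgK invg1 !mul1g !mulgA.
Qed.

Lemma conj_Zb u v : u \in Zb -> u ^ v \in Zb.
Proof.
move=> uZb; rewrite inZb (conjW2 v uZb) eqxx andbT; apply/forallP=> c.
rewrite conjW1 //; move: uZb; rewrite inZb => /andP[/forallP ? _]; by [].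
Qed.

Lemma comm_Zb u v : u \in Zb -> [~ u, v] \in F.
Proof.
move=> uZb; have ui : u^-1 \in Zb by rewrite groupV.
have uv := conj_Zb v uZb.
move: (uZb); rewrite inZb => /andP[/forallP uZ /eqP u2].
case: (Zb_mul ui uv) => Zm E _; rewrite /commg inF.
move: Zm; rewrite inZb => /andP[-> ->] /=.
rewrite (eq_bigr _ (fun c _ => E c)).
rewrite (eq_bigr (fun c => (u.1 c)^-1 * u.1 (v.2 * c))); last first.
  by move=> c _; rewrite invW1 u2 mul1g conjW1.
rewrite prodM_Z ?prod_reindex; last by move=> c.
  by rewrite -prodM_Z // big1 // => c _; rewrite mulVg.
by move=> i j; apply: cZC.
Qed.

Lemma Zb_comm h u : h \notin ZH -> (forall v, [~ u, v] \in F) -> u \in Zb.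
Proof.
move=> hZ uc.
have dF k x0 : [~ dv k x0, u] \in F by rewrite -invg_comm groupV.
have dZ k x0 x : [~ dv k x0, u].1 x \in ZH.
  by move: (dF k x0); rewrite inF => /and3P[/forallP ? _ _].
have u2 : u.2 = 1.
  case: (eqVneq u.2 1) => // nu2; exfalso.
  have := dZ h 1 1; rewrite comm_dv mulg1 eqxx (negPf nu2) mulg1 mulVg mulg1.
  by rewrite groupV (negPf hZ).
rewrite inZb u2 eqxx andbT; apply/forallP=> x0.
apply/centerP; split; first exact: in_setT.
move=> k _.
have : \prod_c [~ dv k x0, u].1 c == 1.
  by move: (dF k x0); rewrite inF => /and3P[_ _].
rewrite (eq_bigr (fun c => if c == x0 then [~ k, u.1 x0] else 1)).
  by rewrite prod_delta => /commgP /commute_sym.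
move=> c _; rewrite comm_dv u2 !mul1g; case: eqP => [->|_]; first by rewrite /commg /conjg !mulgA.
by rewrite invg1 mulg1 mul1g mulVg.
Qed.

Lemma N_F y : y \in 'N(F).
Proof. exact: subsetP (normal_norm F_normal) y (in_setT y). Qed.

Lemma coset_center h x : h \notin ZH ->
  (coset F x \in 'Z([set: W] / F)) = (x \in Zb).
Proof.
move=> hZ; apply/idP/idP.
  move=> /centerP [_ cx]; apply: (Zb_comm hZ) => v.
  apply: coset_idr; first exact: N_F.
  rewrite morphR ?N_F //; apply/eqP/commgP; apply: cx.
  exact: mem_quotient (in_setT v).
move=> xZ; apply/centerP; split; first exact: mem_quotient (in_setT x).
move=> _ /morphimP[y Ny _ ->].
apply/commgP; rewrite -morphR ?N_F //; apply/eqP; apply: coset_id.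
exact: comm_Zb.
Qed.

Lemma center_quo h : h \notin ZH -> 'Z([set: W] / F) = Zb / F.
Proof.
move=> hZ; rewrite -(cosetpreK 'Z(_)).
suff -> : coset F @*^-1 'Z([set: W] / F) = Zb by [].
apply/setP=> x.
apply/morphpreP/idP; first by case=> _; rewrite (coset_center _ hZ).
by move=> xZ; split; [exact: N_F | rewrite (coset_center _ hZ)].
Qed.

Definition phi (u : W) : hT := \prod_(c : cT) u.1 c.

Lemma phiM : {in Zb &, {morph phi : u v / u * v}}.
Proof.
move=> u v uZ vZ; case: (Zb_mul uZ vZ) => _ E _.
rewrite /phi (eq_bigr _ (fun c _ => E c)) prodM_Z //.
by move=> c; move: vZ; rewrite inZb => /andP[/forallP ? _].
Qed.
Canonical phi_morph := Morphism phiM.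

Lemma ker_phi : 'ker phi_morph = F.
Proof.
apply/setP=> u; rewrite /ker /= inF.
apply/morphpreP/idP.
  rewrite inZb inE => -[] /andP[-> ->] //.
move=> H; have [uZ u2 up] := and3P H; rewrite inZb uZ u2 inE; split => //.
Qed.

Lemma im_phi : phi_morph @* Zb = ZH.
Proof.
apply/eqP; rewrite eqEsubset; apply/andP; split.
  apply/subsetP=> _ /morphimP[u _ uZ ->]; rewrite /= /phi.
  by apply: group_prod => c _; move: uZ; rewrite inZb => /andP[/forallP ? _].
apply/subsetP=> z zZ; apply/morphimP.
have dZ : dv z 1 \in Zb.
  rewrite inZb eqxx andbT; apply/forallP=> c; rewrite /dv ffunE.
  by case: eqP.
apply: (MorphimSpec dZ dZ).
rewrite /= /phi (eq_bigr (fun c => if c == 1 then z else 1)) ?prod_delta //.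
by move=> c _; rewrite /dv ffunE.
Qed.

Lemma center_isog h : h \notin ZH -> 'Z([set: W] / F) \isog ZH.
Proof.
move=> hZ; rewrite (center_quo hZ) -im_phi -ker_phi.
exact: first_isog.
Qed.

End Wr.

Theorem theorem4p2 (p : nat) (hT cT : finGroupType) :
  prime p ->
  p.-group [set: hT] -> ~~ abelian [set: hT] -> cyclic 'Z([set: hT]) ->
  p.-group [set: cT] ->
  wreath_F hT cT <| [set: wreath_type hT cT] /\
  'Z([set: wreath_type hT cT] / wreath_F hT cT) \isog 'Z([set: hT]) /\
  monolithic ([set: wreath_type hT cT] / wreath_F hT cT).
Proof.
move=> pp pH nab cZ pC.
have [h hZ] : exists h, h \notin 'Z([set: hT]).
  move: nab; rewrite /abelian => /subsetPn [h _ hC]; exists h.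
  apply: contra hC => /centerP[_ ch]; apply/centP => y yA; exact: ch y yA.
have Zi := center_isog cT hZ.
split; first exact: F_normal.
split; first exact: Zi.
set J := [set: wreath_type hT cT] / wreath_F hT cT.
have pW : p.-group [set: wreath_type hT cT].
  move: pH pC; rewrite /pgroup !cardsT card_prod card_ffun => pH pC.
  by rewrite pnatM pC pnatX pH.
have pJ : p.-group J := quotient_pgroup _ pW.
have nilJ := pgroup_nil pJ.
have ntH : [set: hT] != 1.
  by apply: contra nab => /eqP ->; exact: abelian1.
have ntZH : 'Z([set: hT]) != 1 by rewrite center_nil_eq1 // (pgroup_nil pH).
have ntZ : 'Z(J) != 1 by rewrite (isog_eq1 Zi).
have cZJ : cyclic 'Z(J) by rewrite (isog_cyclic Zi).
have pZ : p.-group 'Z(J) := pgroupS (center_sub _) pJ.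
have cK : #|'Ohm_1('Z(J))| = p := Ohm1_cyclic_pgroup_prime cZJ pZ ntZ.
have ntK : 'Ohm_1('Z(J)) != 1 by rewrite -cardG_gt1 cK prime_gt1.
have sK : 'Ohm_1('Z(J)) \subset
    \bigcap_(N : {group coset_of (wreath_F hT cT)} | (N <| J) && (N != 1%G)) N.
  apply/bigcapsP => N /andP[nN ntN].
  have M1 : N :&: 'Z(J) != 1 by apply: meet_center_nil => //; apply/eqP => N1; move: ntN; rewrite -val_eqE /= N1 eqxx.
  have O1 : 'Ohm_1(N :&: 'Z(J)) != 1 by rewrite Ohm1_eq1.
  have sO : 'Ohm_1(N :&: 'Z(J)) \subset 'Ohm_1('Z(J)) := OhmS 1 (subsetIr N _).
  have d := cardSg sO; rewrite cK in d.
  have cO : #|'Ohm_1(N :&: 'Z(J))| = p.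
    by apply/(prime_nt_dvdP pp _ d); rewrite -cardG_gt1 in O1; rewrite neq_ltn O1 orbT.
  have E : 'Ohm_1(N :&: 'Z(J)) = 'Ohm_1('Z(J)).
    by apply/eqP; rewrite eqEcard sO cK cO leqnn.
  rewrite -E; apply: subset_trans (Ohm_sub 1 _) (subsetIl _ _).
rewrite /monolithic; apply/negP => /eqP E; move: sK; rewrite E subG1.
by apply/negP.
Qed.
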